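(* Under the hypotheses of the sequential gradient descent setting (see context), $\sum_{k=1}^\infty\gamma_k^2\|\nabla J_k(x_k)\|^2<\infty$.
   Context: $Q\in\mathbb{R}^{n\times n}$ symmetric positive semidefinite, $q\in\mathbb{R}^n$, $A\in\mathbb{R}^{n\times n}$ symmetric positive definite, $v\in\mathbb{R}^n$. $f(x)=\tfrac12 x^\top Qx+q^\top x$, $g(x)=(x-v)^\top A(x-v)$, $\mathcal{C}=\{x:g(x)\le1\}$, $\partial\mathcal{C}=\{x:g(x)=1\}$, $J_k(x)=f(x)+\frac{m}{k}g(x)^k$, $L_k=\bar\sigma(Q+m(4k-2)A)$, $r=\sqrt{\underline\sigma(A)}/\bar\sigma(A)$ ($\bar\sigma,\underline\sigma$ largest/smallest singular value). Setting: $m>0$ satisfies Requirement 2, namely with $w(x)=\nabla f(x)+m\nabla g(x)$, $\|w(x)\|^2\|\nabla g(x)\|\le 2rL_1\langle w(x),\nabla g(x)\rangle$ for all $x\in\partial\mathcal{C}$; $x_1\in\mathcal{C}$; $x_{k+1}=x_k-\gamma_k\nabla J_k(x_k)$ with $0<\gamma_k\le1/L_k$, $\sum_k\gamma_k^2<\infty$, $\sum_k\gamma_k=\infty$. *)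

(* Defs.v *)
From HB Require Import structures.
From mathcomp Require Import all_boot all_order all_algebra.
From mathcomp Require Import all_classical all_reals all_analysis.
Set Implicit Arguments. Unset Strict Implicit. Unset Printing Implicit Defensive.
Import Order.TTheory GRing.Theory Num.Theory.
Local Open Scope ring_scope.
Local Open Scope classical_set_scope.

Section Defs.
Variables (R : realType) (n : nat).

Definition dotv (x y : 'cV[R]_n) : R := (x^T *m y) 0 0.
Definition normv (x : 'cV[R]_n) : R := Num.sqrt (dotv x x).

Definition sigma_max (M : 'M[R]_n) : R :=
  sup [set normv (M *m x) | x in [set x : 'cV[R]_n | normv x = 1]].
Definition sigma_min (M : 'M[R]_n) : R :=
  inf [set normv (M *m x) | x in [set x : 'cV[R]_n | normv x = 1]].

Definition sym_psd (M : 'M[R]_n) : Prop :=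
  M^T = M /\ forall x : 'cV[R]_n, 0 <= dotv x (M *m x).
Definition sym_pd (M : 'M[R]_n) : Prop :=
  M^T = M /\ forall x : 'cV[R]_n, x != 0 -> 0 < dotv x (M *m x).

Variables (Q : 'M[R]_n) (q : 'cV[R]_n) (A : 'M[R]_n) (v : 'cV[R]_n) (m : R).

Definition f_obj (x : 'cV[R]_n) : R := 2^-1 * dotv x (Q *m x) + dotv q x.
Definition g_con (x : 'cV[R]_n) : R := dotv (x - v) (A *m (x - v)).
Definition J (k : nat) (x : 'cV[R]_n) : R := f_obj x + m / k%:R * g_con x ^+ k.

(* gradients, computed explicitly (the functions are explicit polynomials) *)
Definition grad_f (x : 'cV[R]_n) : 'cV[R]_n := Q *m x + q.
Definition grad_g (x : 'cV[R]_n) : 'cV[R]_n := 2%:R *: (A *m (x - v)).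
(* for k >= 1 : grad J_k = grad f + m g^(k-1) grad g *)
Definition grad_J (k : nat) (x : 'cV[R]_n) : 'cV[R]_n :=
  grad_f x + (m * g_con x ^+ k.-1) *: grad_g x.

Definition Lk (k : nat) : R := sigma_max (Q + (m * (4 * k%:R - 2)) *: A).
Definition r_const : R := Num.sqrt (sigma_min A) / sigma_max A.

Definition w_vec (x : 'cV[R]_n) : 'cV[R]_n := grad_f x + m *: grad_g x.

Definition requirement2 : Prop :=
  forall x : 'cV[R]_n, g_con x = 1 ->
    normv (w_vec x) ^+ 2 * normv (grad_g x)
      <= 2 * r_const * Lk 1 * dotv (w_vec x) (grad_g x).

End Defs.

(* Main.v *)
Require Import Defs.
From HB Require Import structures.
From mathcomp Require Import all_boot all_order all_algebra.
From mathcomp Require Import all_classical all_reals all_analysis.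
From mathcomp Require Import ring lra.
Import Order.TTheory GRing.Theory Num.Theory.
Local Open Scope ring_scope.
Local Open Scope classical_set_scope.



Section Basics.
Context {R : realType} {n : nat}.
Implicit Types (x y z : 'cV[R]_n) (M : 'M[R]_n).

Lemma dotvE x y : dotv x y = \sum_i x i 0 * y i 0.
Proof. by rewrite /dotv !mxE; apply: eq_bigr => i _; rewrite mxE. Qed.

Lemma dotvC x y : dotv x y = dotv y x.
Proof. by rewrite !dotvE; apply: eq_bigr => i _; rewrite mulrC. Qed.

Lemma dotvDl x y z : dotv (x + y) z = dotv x z + dotv y z.
Proof. by rewrite !dotvE -big_split; apply: eq_bigr => i _; rewrite !mxE mulrDl. Qed.

Lemma dotvDr x y z : dotv z (x + y) = dotv z x + dotv z y.
Proof. by rewrite dotvC dotvDl !(dotvC z). Qed.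

Lemma dotvZl a x y : dotv (a *: x) y = a * dotv x y.
Proof. by rewrite !dotvE mulr_sumr; apply: eq_bigr => i _; rewrite !mxE mulrA. Qed.

Lemma dotvZr a x y : dotv x (a *: y) = a * dotv x y.
Proof. by rewrite dotvC dotvZl dotvC. Qed.

Lemma dotvNl x y : dotv (- x) y = - dotv x y.
Proof. by rewrite -scaleN1r dotvZl mulN1r. Qed.

Lemma dotvNr x y : dotv x (- y) = - dotv x y.
Proof. by rewrite dotvC dotvNl dotvC. Qed.

Lemma dotvBl x y z : dotv (x - y) z = dotv x z - dotv y z.
Proof. by rewrite dotvDl dotvNl. Qed.

Lemma dotvBr x y z : dotv z (x - y) = dotv z x - dotv z y.
Proof. by rewrite dotvDr dotvNr. Qed.

Lemma dotv0l x : dotv 0 x = 0.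
Proof. by rewrite -(scale0r 0) dotvZl mul0r. Qed.

Lemma dotv0r x : dotv x 0 = 0.
Proof. by rewrite dotvC dotv0l. Qed.

Lemma dotv_ge0 x : 0 <= dotv x x.
Proof. by rewrite dotvE; apply: sumr_ge0 => i _; rewrite -expr2 sqr_ge0. Qed.

Lemma dotv_eq0 x : dotv x x = 0 -> x = 0.
Proof.
rewrite dotvE => /eqP; rewrite psumr_eq0; last by move=> i _; rewrite -expr2 sqr_ge0.
move=> /allP H; apply/matrixP => i j; rewrite (ord1 j) !mxE.
by have := H i (mem_index_enum i); rewrite implyTb mulf_eq0 orbb => /eqP.
Qed.

Lemma dotv_mulmx x M y : dotv x (M *m y) = dotv (M^T *m x) y.
Proof. by rewrite /dotv trmx_mul trmxK mulmxA. Qed.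

Lemma dotv_sym x M y : M^T = M -> dotv x (M *m y) = dotv y (M *m x).
Proof. by move=> HM; rewrite dotv_mulmx HM dotvC. Qed.

Lemma normv_ge0 x : 0 <= normv x.
Proof. exact: sqrtr_ge0. Qed.

Lemma normv_sq x : normv x ^+ 2 = dotv x x.
Proof. by rewrite /normv sqr_sqrtr // dotv_ge0. Qed.

Lemma normv_eq0 x : normv x = 0 -> x = 0.
Proof. by move=> h; apply: dotv_eq0; rewrite -normv_sq h expr0n. Qed.

Lemma normvZ a x : normv (a *: x) = `|a| * normv x.
Proof.
rewrite /normv dotvZl dotvZr mulrA -expr2 sqrtrM ?sqr_ge0 //.
by rewrite sqrtr_sqr.
Qed.

Lemma normvN x : normv (- x) = normv x.
Proof. by rewrite -scaleN1r normvZ normrN1 mul1r. Qed.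

Lemma cs_form M x y : M^T = M -> (forall z, 0 <= dotv z (M *m z)) ->
  dotv x (M *m y) ^+ 2 <= dotv x (M *m x) * dotv y (M *m y).
Proof.
move=> HM Hpsd.
set P := dotv x (M *m x); set B := dotv x (M *m y); set C := dotv y (M *m y).
have Hq t : 0 <= P + 2 * t * B + t ^+ 2 * C.
  have := Hpsd (x + t *: y).
  rewrite mulmxDr dotvDl !dotvDr -!scalemxAr !dotvZl !dotvZr.
  rewrite (dotv_sym y M x HM) -/P -/B -/C.
  move=> H; apply: (le_trans H); rewrite le_eqVlt; apply/orP; left; apply/eqP.
  by ring.
have C0 : 0 <= C by apply: Hpsd.
have P0 : 0 <= P by apply: Hpsd.
have [Cz|Cp] := eqVneq C 0.
  have [Bz|Bn] := eqVneq B 0; first by rewrite Bz Cz expr0n mulr0.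
  have := Hq (- (P + 1) / (2 * B)); rewrite Cz mulr0 addr0.
  have -> : 2 * (- (P + 1) / (2 * B)) * B = - (P + 1).
    by field; rewrite Bn.
  lra.
have Cpos : 0 < C by rewrite lt_def Cp C0.
have := Hq (- B / C).
have -> : P + 2 * (- B / C) * B + (- B / C) ^+ 2 * C = P - B ^+ 2 / C.
  by field; rewrite Cp.
rewrite subr_ge0 ler_pdivrMr //.
Qed.

Lemma cs_dot x y : dotv x y ^+ 2 <= dotv x x * dotv y y.
Proof.
have h1 : forall z, 0 <= dotv z (1%:M *m z) by move=> z; rewrite mul1mx; exact: dotv_ge0.
have := @cs_form 1%:M x y (trmx1 _ _) h1.
by rewrite !mul1mx.
Qed.

Lemma cs_norm x y : dotv x y <= normv x * normv y.
Proof.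
have h := cs_dot x y; rewrite -!normv_sq -exprMn in h.
have := normv_ge0 x; have := normv_ge0 y.
move: h; set a := dotv x y; set b := normv x * normv y => h h1 h2.
have b0 : 0 <= b by rewrite mulr_ge0.
rewrite !expr2 in h; nra.
Qed.

Lemma normvD x y : normv (x + y) <= normv x + normv y.
Proof.
have h : normv (x + y) ^+ 2 <= (normv x + normv y) ^+ 2.
  rewrite normv_sq dotvDl !dotvDr (dotvC y x) sqrrD -!normv_sq.
  have := cs_norm x y; lra.
have := normv_ge0 (x + y); have := normv_ge0 x; have := normv_ge0 y.
rewrite !expr2 in h; nra.
Qed.

Lemma normvB x y : normv (x - y) <= normv x + normv y.
Proof. by rewrite -(normvN y); apply: normvD. Qed.

Lemma normv0 : normv (0 : 'cV[R]_n) = 0.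
Proof. by rewrite /normv dotv0l sqrtr0. Qed.

Lemma exists_unit : (0 < n)%N -> exists x : 'cV[R]_n, normv x = 1.
Proof.
move=> n0; set c : 'cV[R]_n := const_mx 1.
have hc : dotv c c = n%:R.
  rewrite dotvE (eq_bigr (fun _ => 1)); last by move=> i _; rewrite !mxE mulr1.
  by rewrite sumr_const card_ord.
have cpos : 0 < normv c by rewrite /normv hc sqrtr_gt0 ltr0n.
exists ((normv c)^-1 *: c); rewrite normvZ ger0_norm ?invr_ge0 ?(ltW cpos) //.
by rewrite mulVf // gt_eqF.
Qed.

Definition Sset M := [set normv (M *m x) | x in [set x : 'cV[R]_n | normv x = 1]].

Lemma mulmx_entry M x i : (M *m x) i 0 = dotv (row i M)^T x.
Proof. by rewrite dotvE !mxE; apply: eq_bigr => j _; rewrite !mxE. Qed.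

Lemma frob_bound M x :
  normv (M *m x) ^+ 2 <= (\sum_i dotv (row i M)^T (row i M)^T) * normv x ^+ 2.
Proof.
rewrite !normv_sq mulr_suml {1}dotvE; apply: ler_sum => i _.
by rewrite -expr2 mulmx_entry cs_dot.
Qed.

Lemma Sset_ub M : has_ubound (Sset M).
Proof.
exists (Num.sqrt (\sum_i dotv (row i M)^T (row i M)^T)) => _ [x /= hx <-].
have h := frob_bound M x; rewrite hx expr1n mulr1 in h.
by rewrite -(ger0_norm (normv_ge0 (M *m x))) -sqrtr_sqr ler_wsqrtr.
Qed.

Lemma sig_ub M x : normv x = 1 -> normv (M *m x) <= sigma_max M.
Proof.
move=> hx; have hs : has_sup (Sset M) by split; [exists (normv (M *m x)), x | exact: Sset_ub].
by apply: (sup_upper_bound hs); exists x.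
Qed.

Lemma sig_op M x : normv (M *m x) <= sigma_max M * normv x.
Proof.
have [->|xn] := eqVneq x 0; first by rewrite mulmx0 normv0 mulr0.
have np : 0 < normv x.
  rewrite lt_def normv_ge0 andbT; apply/eqP => h; move: xn; rewrite (normv_eq0 _ h) eqxx //.
have hu : normv ((normv x)^-1 *: x) = 1.
  by rewrite normvZ ger0_norm ?invr_ge0 ?(ltW np) // mulVf // gt_eqF.
have := sig_ub M _ hu; rewrite -scalemxAr normvZ ger0_norm ?invr_ge0 ?(ltW np) //.
by rewrite mulrC -ler_pdivlMr // ?invr_gt0 // invrK mulrC.
Qed.

Lemma sig_ge0 M : (0 < n)%N -> 0 <= sigma_max M.
Proof.
move=> n0; have [x hx] := exists_unit n0.
exact: le_trans (normv_ge0 _) (sig_ub M _ hx).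
Qed.

Lemma sig_le M b : (0 < n)%N -> (forall x, normv x = 1 -> normv (M *m x) <= b) ->
  sigma_max M <= b.
Proof.
move=> n0 hb; have [x hx] := exists_unit n0.
apply: ge_sup; first by exists (normv (M *m x)), x.
by move=> _ [y /= hy <-]; apply: hb.
Qed.

Lemma sigmin_lb M x : normv x = 1 -> sigma_min M <= normv (M *m x).
Proof.
move=> hx; apply: ge_inf; last by exists x.
by exists 0 => _ [y _ <-]; apply: normv_ge0.
Qed.

Lemma sigmin_op M x : sigma_min M * normv x <= normv (M *m x).
Proof.
have [->|xn] := eqVneq x 0; first by rewrite mulmx0 normv0 mulr0.
have np : 0 < normv x.
  rewrite lt_def normv_ge0 andbT; apply/eqP => h; move: xn; rewrite (normv_eq0 _ h) eqxx //.
have hu : normv ((normv x)^-1 *: x) = 1.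
  by rewrite normvZ ger0_norm ?invr_ge0 ?(ltW np) // mulVf // gt_eqF.
have := sigmin_lb M _ hu; rewrite -scalemxAr normvZ ger0_norm ?invr_ge0 ?(ltW np) //.
by rewrite mulrC ler_pdivlMr.
Qed.

Lemma quad_op M x : dotv x (M *m x) <= sigma_max M * dotv x x.
Proof.
apply: (le_trans (cs_norm _ _)); rewrite -normv_sq.
have := sig_op M x; have := normv_ge0 x; rewrite expr2; nra.
Qed.

Lemma quad_split (Q A : 'M[R]_n) c x y :
  dotv x ((Q + c *: A) *m y) = dotv x (Q *m y) + c * dotv x (A *m y).
Proof. by rewrite mulmxDl dotvDr -scalemxAl dotvZr. Qed.

Lemma psd_sq M x : (0 < n)%N -> sym_psd M ->
  normv (M *m x) ^+ 2 <= sigma_max M * dotv x (M *m x).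
Proof.
move=> n0 [HM Hp].
have e1 : normv (M *m x) ^+ 2 = dotv x (M *m (M *m x)).
  by rewrite normv_sq [RHS]dotv_mulmx HM.
have h1 := cs_form M x (M *m x) HM Hp.
have h2 := quad_op M (M *m x).
rewrite -e1 in h1; rewrite -normv_sq in h2.
have s0 := sig_ge0 M n0; have P0 := Hp x.
move: h1 h2.
set N := normv (M *m x) ^+ 2; set P := dotv x (M *m x); set s := sigma_max M.
set W := dotv (M *m x) (M *m (M *m x)).
have N0 : 0 <= N by rewrite /N sqr_ge0.
move=> h1 h2.
have h3 : N ^+ 2 <= P * (s * N) by apply: (le_trans h1); rewrite ler_wpM2l.
have [Nz|Np] := eqVneq N 0; first by rewrite Nz mulr_ge0.
have Npos : 0 < N by rewrite lt_def Np N0.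
rewrite expr2 in h3; nra.
Qed.

Lemma sig_mono (Q A : 'M[R]_n) c1 c2 : (0 < n)%N -> sym_psd Q -> sym_psd A ->
  0 <= c1 <= c2 -> sigma_max (Q + c1 *: A) <= sigma_max (Q + c2 *: A).
Proof.
move=> n0 [HQ pQ] [HA pA] /andP[c10 c12].
have psd1 : sym_psd (Q + c1 *: A).
  split; first by rewrite linearD /= linearZ /= HQ HA.
  by move=> x; rewrite quad_split addr_ge0 ?mulr_ge0.
set s1 := sigma_max (Q + c1 *: A); set s2 := sigma_max (Q + c2 *: A).
have s10 : 0 <= s1 by apply: sig_ge0.
have s20 : 0 <= s2 by apply: sig_ge0.
have hb : s1 <= Num.sqrt (s1 * s2).
  apply: sig_le => // x hx.
  have h1 := psd_sq _ x n0 psd1.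
  have h2 : dotv x ((Q + c1 *: A) *m x) <= dotv x ((Q + c2 *: A) *m x).
    rewrite !quad_split lerD2l ler_wpM2r //.
  have h3 := quad_op (Q + c2 *: A) x.
  rewrite -normv_sq hx expr1n mulr1 -/s2 in h3.
  have h4 : normv ((Q + c1 *: A) *m x) ^+ 2 <= s1 * s2.
    apply: (le_trans h1); rewrite ler_wpM2l //; exact: le_trans h2 h3.
  by rewrite -(ger0_norm (normv_ge0 _)) -sqrtr_sqr ler_wsqrtr.
have : s1 ^+ 2 <= s1 * s2.
  have hq : Num.sqrt (s1 * s2) ^+ 2 = s1 * s2 by rewrite sqr_sqrtr ?mulr_ge0.
  have hs := sqrtr_ge0 (s1 * s2).
  move: hq hs hb; set t := Num.sqrt (s1 * s2) => hq hs hb.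
  rewrite -hq !expr2; nra.
rewrite expr2 => h; have [->|s1p] := eqVneq s1 0; first by [].
have : 0 < s1 by rewrite lt_def s1p s10.
nra.
Qed.

End Basics.



Section Alg.
Context {R : realType}.

Lemma bernoulli (t : R) (j : nat) : 0 <= t <= 1 -> 1 - t ^+ j <= j%:R * (1 - t).
Proof.
move=> /andP[t0 t1]; elim: j => [|j IH]; first by rewrite expr0 subrr mul0r.
have h1 : 0 <= t ^+ j by rewrite exprn_ge0.
have h2 : t ^+ j <= 1 by rewrite exprn_ile1.
rewrite exprS -natr1; nra.
Qed.

Lemma core_alg (G0 al s b : R) (j : nat) :
  0 <= G0 <= 1 -> 0 <= al -> 0 <= s -> b ^+ 2 <= al * G0 ->
  G0 + 2 * s * b + s ^+ 2 * al = 1 ->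
  b * (1 - G0 ^+ j) <= 2 * j%:R * al * s.
Proof.
move=> /andP[g0 g1] a0 s0 hb he.
have hj : 0 <= 1 - G0 ^+ j by rewrite subr_ge0 exprn_ile1.
have [bn|bp] := lerP b 0.
  have : b * (1 - G0 ^+ j) <= 0 by rewrite mulr_le0_ge0.
  move=> h; apply: (le_trans h); rewrite !mulr_ge0 //.
have hB := bernoulli G0 j (introT andP (conj g0 g1)).
have jj : 0 <= (j%:R : R) by [].
have e1 : 1 - G0 = 2 * s * b + s ^+ 2 * al by lra.
rewrite e1 in hB.
have h3 : b * (1 - G0 ^+ j) <= b * (j%:R * (2 * s * b + s ^+ 2 * al)).
  by rewrite ler_wpM2l // ltW.
apply: (le_trans h3).
have h4 : 2 * b ^+ 2 + s * al * b <= 2 * al.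
  have : s * b <= 2 * (2 * s * b + s ^+ 2 * al) by nra.
  rewrite -e1 => h5; nra.
have -> : b * (j%:R * (2 * s * b + s ^+ 2 * al)) = j%:R * s * (2 * b ^+ 2 + s * al * b) by ring.
have -> : 2 * j%:R * al * s = j%:R * s * (2 * al) by ring.
by rewrite ler_wpM2l ?mulr_ge0.
Qed.

Lemma sq_zero (W N : R) : 0 <= W -> 0 < N -> W ^+ 2 * (2 * N) <= 0 -> W = 0.
Proof.
move=> W0 N0 h.
have : W ^+ 2 <= 0 by move: h; rewrite pmulr_lle0 // mulr_gt0.
move=> h2; have h3 : W ^+ 2 = 0 by apply/le_anti; rewrite h2 sqr_ge0.
by move: h3 => /eqP; rewrite expf_eq0 /= => /eqP.
Qed.

End Alg.

Section Main.
Context {R : realType} {n : nat} {Q : 'M[R]_n} {q : 'cV[R]_n} {A : 'M[R]_n}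
  {v : 'cV[R]_n} {m : R}.
Hypotheses (n0 : (0 < n)%N) (HQ : sym_psd Q) (HA : sym_pd A) (m0 : 0 < m).

Local Notation g := (g_con A v).
Local Notation gJ := (grad_J Q q A v m).

Lemma A_sym : A^T = A. Proof. by case: HA. Qed.

Lemma A_psd : sym_psd A.
Proof.
split; first exact: A_sym.
move=> x; have [->|xn] := eqVneq x 0; first by rewrite dotv0l.
by apply: ltW; case: HA => _ /(_ x xn).
Qed.

Lemma g_ge0 x : 0 <= g x.
Proof. by case: A_psd => _ h; apply: h. Qed.

Lemma g_expand x a s : g (x + s *: a) =
  g x + 2 * s * dotv a (A *m (x - v)) + s ^+ 2 * dotv a (A *m a).
Proof.
rewrite /g_con (_ : x + s *: a - v = (x - v) + s *: a); last by rewrite addrAC.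
move: (x - v) => d.
rewrite mulmxDr !dotvDl !dotvDr -!scalemxAr !dotvZl !dotvZr.
rewrite (@dotv_sym _ _ d A a A_sym); ring.
Qed.

Lemma gradJ_dot a k y : dotv a (gJ k y) = dotv a (Q *m y) + dotv a q
  + 2 * m * g y ^+ k.-1 * dotv a (A *m (y - v)).
Proof.
rewrite /grad_J /grad_f /grad_g !dotvDr !dotvZr; ring.
Qed.

Lemma monotone k x a s gam : (1 <= k)%N -> 0 <= gam -> gam * Lk Q A m k <= 1 ->
  g x <= 1 -> 0 <= s -> g (x + s *: a) = 1 ->
  dotv a (x - gam *: gJ k x) <= dotv a ((x + s *: a) - gam *: gJ k (x + s *: a)).
Proof.
case: k => [//|k] _ gam0 gL gx s0 gz.
rewrite !dotvBr !dotvZr !gradJ_dot gz expr1n /=.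
have e1 : x + s *: a - v = (x - v) + s *: a by rewrite addrAC.
set G0 := g x; set b := dotv a (A *m (x - v)); set al := dotv a (A *m a).
set qa := dotv a (Q *m a); set aa := dotv a a.
have eQ : dotv a (Q *m (x + s *: a)) = dotv a (Q *m x) + s * qa.
  by rewrite mulmxDr dotvDr -scalemxAr dotvZr.
have eA : dotv a (A *m (x + s *: a - v)) = b + s * al.
  by rewrite e1 mulmxDr dotvDr -scalemxAr dotvZr.
have ex : dotv a (x + s *: a) = dotv a x + s * aa by rewrite dotvDr dotvZr.
rewrite eQ eA ex mulr1.
have hG := gz; rewrite g_expand -/G0 -/b -/al in hG.
have al0 : 0 <= al by case: A_psd => _ h; apply: h.
have hb : b ^+ 2 <= al * G0.
  by have := @cs_form _ _ A a (x - v) A_sym (proj2 A_psd).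
have hc := @core_alg R G0 al s b k (introT andP (conj (g_ge0 x) gx)) al0 s0 hb hG.
have hL : qa + m * (4 * k.+1%:R - 2) * al <= Lk Q A m k.+1 * aa.
  by rewrite /qa /al -quad_split; apply: quad_op.
have aa0 : 0 <= aa by apply: dotv_ge0.
have hk : m * (4 * k.+1%:R - 2) = 2 * m * (1 + 2 * k%:R) by rewrite -natr1; ring.
rewrite hk in hL.
have inner : s * qa + 2 * m * (b + s * al) - 2 * m * G0 ^+ k * b
    <= s * (Lk Q A m k.+1 * aa).
  have : 2 * m * (b * (1 - G0 ^+ k)) <= 2 * m * (2 * k%:R * al * s).
    by rewrite ler_wpM2l // mulr_ge0 // ltW.
  move=> h; apply: le_trans (ler_wpM2l s0 hL); nra.
have saa : 0 <= s * aa by rewrite mulr_ge0.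
have h1 : 0 <= (1 - gam * Lk Q A m k.+1) * (s * aa) by rewrite mulr_ge0 // subr_ge0.
have : gam * (s * qa + 2 * m * (b + s * al) - 2 * m * G0 ^+ k * b)
    <= s * aa.
  apply: le_trans (ler_wpM2l gam0 inner) _.
  have -> : gam * (s * (Lk Q A m k.+1 * aa)) = s * aa - (1 - gam * Lk Q A m k.+1) * (s * aa) by ring.
  by rewrite lerBlDr lerDl.
move=> h; nra.
Qed.

Lemma sqrt_sigmin_le d : g (d + v) = 1 -> Num.sqrt (sigma_min A) <= normv (A *m d).
Proof.
rewrite /g_con addrK => gd.
set N := normv (A *m d); set sm := sigma_min A.
have h1 := sigmin_op A d; have h2 := cs_norm d (A *m d); rewrite gd in h2.
have N0 : 0 <= N := normv_ge0 _. have d0 := normv_ge0 d.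
have [smn|smp] := lerP sm 0; first by rewrite ler0_sqrtr.
have : sm <= N ^+ 2 by rewrite -/sm -/N in h1 h2; nra.
by move=> h; rewrite -(ger0_norm N0) -sqrtr_sqr ler_wsqrtr.
Qed.

Lemma boundary k z gam : (1 <= k)%N -> requirement2 Q q A v m -> g z = 1 ->
  0 <= gam -> gam * Lk Q A m 1 <= 1 -> g (z - gam *: gJ k z) <= 1.
Proof.
move=> k1 req gz gam0 gL.
have ew : gJ k z = w_vec Q q A v m z by rewrite /grad_J /w_vec gz expr1n mulr1.
have hreq := req z gz.
rewrite ew; move: hreq.
rewrite /grad_g normvZ dotvZr ger0_norm // .
have hsm := sqrt_sigmin_le (z - v); rewrite subrK in hsm; have {}hsm := hsm gz.
move: gz hsm.
rewrite /g_con (_ : z - gam *: w_vec Q q A v m z - v = (z - v) - gam *: w_vec Q q A v m z);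
  last by rewrite addrAC.
move: (w_vec Q q A v m z) (z - v) => w d gz hsm hreq.
rewrite mulmxBr !dotvBl !dotvBr -!scalemxAr !dotvZl !dotvZr.
rewrite (@dotv_sym _ _ d A w A_sym) gz.
set X := dotv w (A *m d); set N := normv (A *m d); set W := normv w.
set sA := sigma_max A; set L1 := Lk Q A m 1; set sm := Num.sqrt (sigma_min A).
have hWA : dotv w (A *m w) <= sA * W ^+ 2 by rewrite /W normv_sq quad_op.
have N0 : 0 < N.
  rewrite lt_def normv_ge0 andbT; apply/eqP => /(normv_eq0) hA.
  by move: gz; rewrite hA dotv0r => /eqP; rewrite eq_sym oner_eq0.
have cs1 : X <= W * N by apply: cs_norm.
have cs2 : - X <= W * N.
  by rewrite /X -dotvNl /W -(normvN w); apply: cs_norm.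
have W0 : 0 <= W := normv_ge0 _.
have sA0 : 0 <= sA := sig_ge0 A n0.
have L10 : 0 <= L1 := sig_ge0 _ n0.
have sm0 : 0 <= sm := sqrtr_ge0 _.
have key : gam * sA * W ^+ 2 <= 2 * X.
  have [sAz|sAp] := eqVneq sA 0.
    rewrite sAz mulr0 mul0r.
    move: hreq; rewrite /r_const -/sA sAz invr0 !(mulr0, mul0r) => hreq.
    have : W ^+ 2 * (2 * N) <= 0 by [].
    move=> h; have Wz : W = 0 := sq_zero _ _ W0 N0 h.
    rewrite Wz mul0r in cs1 cs2; lra.
  have sApos : 0 < sA by rewrite lt_def sAp sA0.
  have er : r_const A * sA = sm by rewrite /r_const -/sA -/sm mulfVK.
  have hreq2 : sA * (W ^+ 2 * (2 * N)) <= 4 * sm * L1 * X.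
    have := ler_wpM2l sA0 hreq.
    have -> : sA * (2 * r_const A * Lk Q A m 1 * (2 * X)) = 4 * (r_const A * sA) * L1 * X by rewrite /L1; ring.
    by rewrite er.
  have X0 : 0 <= X.
    rewrite leNgt; apply/negP => Xn.
    have h : 4 * sm * L1 * X <= 0.
      by apply: mulr_ge0_le0; [rewrite !mulr_ge0 // | exact: ltW].
    have h' : W ^+ 2 * (2 * N) <= 0.
      by rewrite -(pmulr_rle0 _ sApos); exact: le_trans hreq2 h.
    have Wz : W = 0 := sq_zero _ _ W0 N0 h'.
    rewrite Wz mul0r in cs1 cs2; lra.
  have h3 : gam * (4 * sm * L1 * X) <= 4 * sm * X.
    have -> : gam * (4 * sm * L1 * X) = (gam * L1) * (4 * sm * X) by ring.
    by rewrite ler_piMl // ?mulr_ge0 // ltW.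
  have h4 : 4 * sm * X <= 4 * N * X by rewrite ler_wpM2r // ler_wpM2l.
  have h5 : gam * sA * W ^+ 2 * (2 * N) <= 4 * N * X.
    apply: le_trans h4; apply: le_trans h3.
    have -> : gam * sA * W ^+ 2 * (2 * N) = gam * (sA * (W ^+ 2 * (2 * N))) by ring.
    by rewrite ler_wpM2l.
  nra.
have : gam * (gam * dotv w (A *m w)) <= gam * (2 * X).
  rewrite ler_wpM2l //; apply: le_trans (ler_wpM2l gam0 hWA) _; nra.
lra.
Qed.

Lemma invariance k x gam : (1 <= k)%N -> requirement2 Q q A v m -> g x <= 1 ->
  0 <= gam -> gam * Lk Q A m k <= 1 -> gam * Lk Q A m 1 <= 1 ->
  g (x - gam *: gJ k x) <= 1.
Proof.
move=> k1 req gx gam0 gLk gL1.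
set y := x - gam *: gJ k x.
set a := A *m (y - v).
have gya : g y = dotv a (y - v) by rewrite /g_con dotvC.
have [a0|an] := eqVneq a 0; first by rewrite gya a0 dotv0l ler01.
set al := dotv a (A *m a).
have alp : 0 < al by case: HA => _ /(_ a an).
set b := dotv a (A *m (x - v)); set G0 := g x.
set D := b ^+ 2 + al * (1 - G0).
have D0 : b ^+ 2 <= D by rewrite /D lerDl mulr_ge0 // ?subr_ge0 // ltW.
set S := Num.sqrt D.
have eS : S ^+ 2 = D by rewrite sqr_sqrtr // (le_trans (sqr_ge0 b)).
have Sb : b <= S.
  apply: le_trans (ler_norm b) _.
  by rewrite -sqrtr_sqr ler_wsqrtr.
set s := (S - b) / al.
have s0 : 0 <= s by rewrite divr_ge0 ?subr_ge0 // ltW.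
have hz : g (x + s *: a) = 1.
  rewrite g_expand -/b -/al -/G0.
  have -> : G0 + 2 * s * b + s ^+ 2 * al = G0 + (S ^+ 2 - b ^+ 2) / al.
    by rewrite /s; field; rewrite gt_eqF.
  by rewrite eS /D addrAC subrr add0r mulrC mulKf ?gt_eqF // addrC subrK.
set z := x + s *: a.
have hmon := @monotone k x a s gam k1 gam0 gLk gx s0 hz.
have hb := @boundary k z gam k1 req hz gam0 gL1.
set Tz := z - gam *: gJ k z.
rewrite -/y -/Tz in hmon hb.
set Z := dotv a (Tz - v).
have hZ : Z ^+ 2 <= g y * g Tz.
  have := @cs_form _ _ A (y - v) (Tz - v) A_sym (proj2 A_psd).
  by rewrite /Z /a dotv_mulmx A_sym.
have hle : g y <= Z by rewrite gya /Z (dotvBr y v a) (dotvBr Tz v a) lerD2r.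
have gy0 := g_ge0 y; have gT0 := g_ge0 Tz.
move: (g y) (g Tz) Z hle hZ gy0 gT0 hb => Gy GT Z' hle hZ gy0 gT0 hb.
have h1 : Gy * Gy <= Z' * Z' := ler_pM gy0 gy0 hle hle.
rewrite expr2 in hZ.
have h2 : Gy * GT <= Gy * 1 := ler_wpM2l gy0 hb.
have h3 : Gy * Gy <= Gy * 1 := le_trans h1 (le_trans hZ h2).
have [->|gyp] := eqVneq Gy 0; first exact: ler01.
by move: h3; rewrite ler_pM2l // lt_def gyp gy0.
Qed.

End Main.



Section Fin.
Variables (R : realType) (n : nat) (Q : 'M[R]_n) (q : 'cV[R]_n) (A : 'M[R]_n)
  (v : 'cV[R]_n) (m : R).
Hypotheses (n0 : (0 < n)%N) (HQ : sym_psd Q) (HA : sym_pd A) (m0 : 0 < m).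

Local Notation g := (g_con A v).
Local Notation gJ := (grad_J Q q A v m).

Lemma A_unit : A \in unitmx.
Proof.
rewrite -row_free_unit; apply: inj_row_free => u hu.
have hx : A *m u^T = 0 by rewrite -{1}(A_sym HA) -trmx_mul hu trmx0.
have : u^T = 0.
  apply/eqP; apply/negPn/negP => hn.
  by case: HA => _ /(_ _ hn); rewrite hx dotv0r ltxx.
by move=> h; rewrite -(trmxK u) h trmx0.
Qed.

Lemma grad_bound : exists B, forall k x, (1 <= k)%N -> g x <= 1 -> normv (gJ k x) <= B.
Proof.
set sQ := sigma_max Q; set sI := sigma_max (invmx A); set sA := sigma_max A.
exists (sQ * (normv v + sI * Num.sqrt sA) + normv q + 2 * m * Num.sqrt sA).
move=> k x k1 gx.
have sQ0 : 0 <= sQ := sig_ge0 _ n0.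
have sI0 : 0 <= sI := sig_ge0 _ n0.
have sA0 : 0 <= sA := sig_ge0 _ n0.
have hAd : normv (A *m (x - v)) <= Num.sqrt sA.
  have h := psd_sq A (x - v) n0 (A_psd HA).
  have h' : normv (A *m (x - v)) ^+ 2 <= sA.
    apply: le_trans h _; rewrite -/sA; rewrite -{2}(mulr1 sA) ler_wpM2l //.
  by rewrite -(ger0_norm (normv_ge0 _)) -sqrtr_sqr ler_wsqrtr.
have hd : normv (x - v) <= sI * Num.sqrt sA.
  have e : x - v = invmx A *m (A *m (x - v)) by rewrite mulKmx // A_unit.
  rewrite {1}e; apply: le_trans (sig_op _ _) _; rewrite ler_wpM2l //.
have hx : normv x <= normv v + normv (x - v).
  by rewrite -{1}(subrK v x) addrC normvD.
have hQx : normv (Q *m x) <= sQ * (normv v + sI * Num.sqrt sA).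
  apply: le_trans (sig_op _ _) _; rewrite ler_wpM2l //.
  by apply: le_trans hx _; rewrite lerD2l.
have g0 := g_ge0 HA x.
have hc : `|m * g x ^+ k.-1| <= m.
  rewrite ger0_norm; last by rewrite mulr_ge0 ?exprn_ge0 // ltW.
  by rewrite -{2}(mulr1 m); apply: ler_wpM2l; [exact: ltW | exact: exprn_ile1].
rewrite /grad_J /grad_f /grad_g.
apply: le_trans (normvD _ _) _.
apply: lerD; first by apply: le_trans (normvD _ _) _; rewrite lerD2r.
rewrite normvZ normvZ (ger0_norm (_ : (0:R) <= 2)) //.
have hn := normv_ge0 (A *m (x - v)).
move: (`|m * g x ^+ k.-1|) hc (normr_ge0 (m * g x ^+ k.-1)) => c hc hc0.
move: (normv (A *m (x - v))) hn hAd => N hn hAd.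
have := sqrtr_ge0 sA; move: (Num.sqrt sA) hAd => S hAd S0.
nra.
Qed.

End Fin.

Lemma sum_nondecr (R : realType) (F : nat -> R) :
  (forall k, (1 <= k)%N -> 0 <= F k) ->
  nondecreasing_seq (fun N => \sum_(1 <= k < N) F k).
Proof.
move=> F0; apply/nondecreasing_seqP => N.
case: N => [|N]; first by rewrite !big_geq.
by rewrite [X in _ <= X]big_nat_recr //= lerDl F0.
Qed.

Lemma normv_n0 (R : realType) (n : nat) (y : 'cV[R]_n) : n = 0%N -> normv y = 0.
Proof.
move=> hn; have -> : y = 0.
  by apply/matrixP => i j; have := ltn_ord i; rewrite {2}hn.
exact: normv0.
Qed.

Theorem lemma5 (R : realType) (n : nat) (Q : 'M[R]_n) (q : 'cV[R]_n)
  (A : 'M[R]_n) (v : 'cV[R]_n) (m : R) (x : nat -> 'cV[R]_n) (gamma : nat -> R) :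
  sym_psd Q -> sym_pd A -> 0 < m -> requirement2 Q q A v m ->
  g_con A v (x 1%N) <= 1 ->
  (forall k, (1 <= k)%N -> x k.+1 = x k - gamma k *: grad_J Q q A v m k (x k)) ->
  (forall k, (1 <= k)%N -> 0 < gamma k /\ gamma k <= (Lk Q A m k)^-1) ->
  cvgn (fun N => \sum_(1 <= k < N) gamma k ^+ 2) ->
  (fun N => \sum_(1 <= k < N) gamma k) @ \oo --> +oo ->
  cvgn (fun N => \sum_(1 <= k < N)
          gamma k ^+ 2 * normv (grad_J Q q A v m k (x k)) ^+ 2).
Proof.
move=> HQ HA m0 req gx1 rec hgam hs2 _.
have [nz|n0] := eqVneq n 0%N.
  rewrite (_ : (fun N => _) = fun=> 0); first exact: is_cvg_cst.
  apply/funext => N; rewrite big1 // => k _.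
  by rewrite normv_n0 // expr0n mulr0.
have {}n0 : (0 < n)%N by rewrite lt0n.
have hL k : (1 <= k)%N -> 0 <= gamma k /\ gamma k * Lk Q A m k <= 1
    /\ gamma k * Lk Q A m 1 <= 1.
  move=> k1; have [g0 g1] := hgam k k1.
  have L0 : 0 <= Lk Q A m k := sig_ge0 _ n0.
  have hLk : gamma k * Lk Q A m k <= 1.
    have [->|Lp] := eqVneq (Lk Q A m k) 0; first by rewrite mulr0 ler01.
    have Lpos : 0 < Lk Q A m k by rewrite lt_def Lp L0.
    by move: g1; rewrite -(ler_pM2r Lpos) mulVf.
  have L1k : Lk Q A m 1 <= Lk Q A m k.
    apply: sig_mono => //; first exact: A_psd.
    have k1R : 1 <= (k%:R : R) by rewrite ler1n.
    apply/andP; split; first by apply: mulr_ge0; [exact: ltW | lra].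
    by apply: ler_wpM2l; [exact: ltW | lra].
  split; first exact: ltW.
  split => //; apply: le_trans hLk; apply: ler_wpM2l => //; exact: ltW.
have inC k : (1 <= k)%N -> g_con A v (x k) <= 1.
  elim: k => [//|k IH] _.
  case: k IH => [_|k IH]; first exact: gx1.
  have [g0 [gk g1]] := hL k.+1 isT.
  rewrite rec //; apply: (invariance n0 HA m0 k.+1 (x k.+1) (gamma k.+1)) => //; exact: IH.
have [B hB] := grad_bound R n Q q A v m n0 HA m0.
have B0 : 0 <= B by apply: le_trans (normv_ge0 _) (hB 1%N (x 1%N) isT gx1).
have tb k : (1 <= k)%N ->
    gamma k ^+ 2 * normv (grad_J Q q A v m k (x k)) ^+ 2 <= B ^+ 2 * gamma k ^+ 2.
  move=> k1; rewrite mulrC ler_wpM2r ?sqr_ge0 //.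
  have := hB k (x k) k1 (inC k k1); have := normv_ge0 (grad_J Q q A v m k (x k)).
  move: (normv _) => N N0 hN; rewrite !expr2; exact: ler_pM.
apply: nondecreasing_is_cvgn.
  by apply: sum_nondecr => k k1; rewrite mulr_ge0 ?sqr_ge0.
have nd2 := @sum_nondecr R (fun k => gamma k ^+ 2) (fun k _ => sqr_ge0 (gamma k)).
exists (B ^+ 2 * limn (fun N => \sum_(1 <= k < N) gamma k ^+ 2)) => _ [N _ <-].
apply: le_trans (_ : B ^+ 2 * \sum_(1 <= k < N) gamma k ^+ 2 <= _).
  rewrite mulr_sumr big_nat_cond [X in _ <= X]big_nat_cond.
  by apply: ler_sum => k /andP[/andP[k1 _] _]; apply: tb.
by rewrite ler_wpM2l ?sqr_ge0 //; apply: nondecreasing_cvgn_le.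
Qed.
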